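(* Let $\mathbf a=(a_1,\dots,a_k)$ be a sequence of nonnegative integers with $\sum_i a_i=n$, and let $0\le j\le k$. Then $|D_j(\mathbf a)|$ equals the coefficient of $x_1^{a_1}\cdots x_k^{a_k}$ in the power series expansion of \[ \frac{1}{(1+x_1)\cdots(1+x_j)(1-x_1-\dots-x_k)}. \]
   Context: For $\mathbf a=(a_1,\dots,a_k)$ with nonnegative integer entries summing to $n$, put $c_0=0$, $c_j=a_1+\dots+a_j$, and let the $j$-th block be $A_j=\{c_{j-1}+1,\dots,c_j\}\subseteq[n]$ (possibly empty). Let $S_{\mathbf a}\subseteq S_n$ be the set of permutations $\pi$ of $[n]$ such that $\pi_i>\pi_{i+1}$ whenever $i$ and $i+1$ lie in the same block (no condition when they lie in different blocks). A fixed point of $\pi$ is an $i$ with $\pi_i=i$. $D_j(\mathbf a)$ denotes the set of permutations in $S_{\mathbf a}$ having no fixed point in $A_1\cup\dots\cup A_j$. *)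

(* Defs.v *)
From mathcomp Require Import all_boot all_order all_algebra all_fingroup.
Set Implicit Arguments. Unset Strict Implicit. Unset Printing Implicit Defensive.
Import GRing.Theory Num.Theory.

(* Compositions a = (a_1,...,a_k) are {ffun 'I_k -> nat}; a_{t+1} = a t. *)
(* Positions/values of [n] = {1..n} are encoded by 'I_n = {0..n-1}
   (i <-> i-1); this shift preserves order and fixed points. *)

Definition csum k (a : {ffun 'I_k -> nat}) (t : nat) : nat :=
  \sum_(s < k | (s < t)%N) a s.

(* i and i' (1-indexed positions) lie in a common block A_{t} *)
Definition same_block k (a : {ffun 'I_k -> nat}) (i i' : nat) : bool :=
  [exists t : 'I_k, (csum a t < i)%N && (i' <= csum a t.+1)%N].

Definition in_Sa k (a : {ffun 'I_k -> nat}) n (pi : 'S_n) : bool :=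
  [forall p : 'I_n, forall q : 'I_n,
     ((q == p.+1 :> nat) && same_block a p.+1 q.+1) ==> (pi q < pi p)%N].

Definition Dset k (a : {ffun 'I_k -> nat}) n (j : nat) : {set 'S_n} :=
  [set pi : 'S_n | in_Sa a pi &&
     [forall p : 'I_n, (p.+1 <= csum a j)%N ==> (pi p != p)]].

Definition series (k : nat) := {ffun 'I_k -> nat} -> int.

Definition msum k (m : {ffun 'I_k -> nat}) : nat := \sum_i m i.

Definition sone k : series k := fun m => Posz ((m == [ffun => 0%N]) : nat).

(* the variable x_{i+1} *)
Definition svar k (i : nat) : series k :=
  fun m => Posz ((m == [ffun t : 'I_k => (t == i :> nat) : nat]) : nat).

Definition sadd k (f g : series k) : series k := fun m => (f m + g m)%R.
Definition sopp k (f : series k) : series k := fun m => (- f m)%R.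

(* Cauchy product: (f*g)_m = sum_{u <= m} f_u g_{m-u} *)
Definition smul k (f g : series k) : series k := fun m =>
  (\sum_(u : {ffun 'I_k -> 'I_(msum m).+1} | [forall i, (u i <= m i)%N])
     f [ffun i => (val (u i))] * g [ffun i => (m i - u i)%N])%R.

Definition prod_one_plus k (j : nat) : series k :=
  foldr (fun i acc => smul (sadd (@sone k) (@svar k i)) acc) (@sone k) (iota 0 j).

Definition one_minus_sum k : series k :=
  sadd (@sone k) (@sopp k (foldr (fun i acc => sadd (@svar k i) acc)
                              (fun _ => 0%R) (iota 0 k))).

Definition denom k (j : nat) : series k := smul (@prod_one_plus k j) (@one_minus_sum k).

(* Main.v *)
Require Import Defs.
From mathcomp Require Import all_boot all_order all_algebra all_fingroup.
From mathcomp Require Import zify.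
Import GRing.Theory Num.Theory.
Set Implicit Arguments. Unset Strict Implicit. Unset Printing Implicit Defensive.

Section Blocks.
Variable k : nat.
Implicit Types a : {ffun 'I_k -> nat}.

Definition dec a (t0 : nat) : {ffun 'I_k -> nat} :=
  [ffun t : 'I_k => a t - ((t : nat) == t0)].
Definition blk a (p : nat) : nat := \sum_(t < k) (csum a t.+1 <= p).

Lemma csum0 a : csum a 0 = 0.
Proof. by rewrite /csum big_pred0. Qed.

Lemma csumS a (t : 'I_k) : csum a t.+1 = csum a t + a t.
Proof.
rewrite /csum (bigD1 t) //= addnC; congr (_ + _).
by apply: eq_bigl => s; rewrite -val_eqE /=; case: (ltngtP s t) => h /=; [by rewrite andbT ltnS ltnW | by rewrite andbT ltnS leqNgt h | by rewrite andbF].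
Qed.

Lemma csum_ge a t : k <= t -> csum a t = msum a.
Proof. by move=> kt; rewrite /csum /msum; apply: eq_bigl => s; rewrite (leq_trans (ltn_ord s) kt). Qed.

Lemma csum_mono a t t' : t <= t' -> csum a t <= csum a t'.
Proof.
move=> tt'; rewrite /csum [X in _ <= X]big_mkcond [X in X <= _]big_mkcond /=.
apply: leq_sum => s _; case: ifP => // st; by rewrite (leq_trans st tt').
Qed.

Lemma csum_le_msum a t : csum a t <= msum a.
Proof. rewrite -(csum_ge a (leqnn k)); case: (leqP t k) => h; first exact: csum_mono.
by rewrite (csum_ge a (ltnW h)) (csum_ge a (leqnn k)). Qed.

Lemma leq_msum a (i : 'I_k) : a i <= msum a.
Proof. by rewrite /msum (bigD1 i) //= leq_addr. Qed.

Lemma csum_dec a (t0 : 'I_k) t : 0 < a t0 -> csum (dec a t0) t = csum a t - (t0 < t).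
Proof.
move=> h; suff: csum (dec a t0) t + (t0 < t) = csum a t by lia.
rewrite /csum.
have -> : (t0 < t : nat) = \sum_(s < k | s < t) ((s : nat) == t0 : nat).
  case: (ltnP t0 t) => h2.
    by rewrite (bigD1 t0) //= eqxx big1 // => s /andP[_ /negbTE]; rewrite -val_eqE => ->.
  rewrite big1 // => s st; case: eqP => //= e; move: st; rewrite e; lia.
rewrite -big_split /=; apply: eq_bigr => s _; rewrite ffunE.
case: eqP => [e|] /=; last by rewrite !subn0 addn0.
have -> : s = t0 by apply: val_inj.
lia.
Qed.

Lemma msum_dec a (t0 : 'I_k) : 0 < a t0 -> msum (dec a t0) = (msum a).-1.
Proof.
move=> h; rewrite -(csum_ge (dec a t0) (leqnn k)) csum_dec // ltn_ord csum_ge //; lia.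
Qed.

Lemma blk_char a (t0 p : nat) : t0 < k -> csum a t0 <= p < csum a t0.+1 -> blk a p = t0.
Proof.
move=> tk /andP[h1 h2]; rewrite /blk.
rewrite (eq_bigr (fun t : 'I_k => (t < t0) : nat)); last first.
  move=> t _; case: (ltnP t t0) => h.
    by rewrite (leq_trans (csum_mono a h) h1).
  by rewrite leqNgt (leq_trans h2) // csum_mono.
rewrite -big_mkcond /=.
rewrite (eq_bigl (fun i : 'I_k => true && (i < t0))) //.
by rewrite -(big_ord_widen _ (fun _ => 1) (ltnW tk)) sum1_card card_ord.
Qed.

Lemma blk_ex a p : p < msum a ->
  blk a p < k /\ csum a (blk a p) <= p < csum a (blk a p).+1.
Proof.
move=> hp.
suff [t0 [h1 h2]] : exists t0, t0 < k /\ csum a t0 <= p < csum a t0.+1.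
  by rewrite (blk_char h1 h2).
have : forall t, t <= k -> p < csum a t -> exists t0, t0 < k /\ csum a t0 <= p < csum a t0.+1.
  elim=> [|t IH] tk; first by rewrite csum0.
  move=> h'; case: (ltnP p (csum a t)) => h.
    by apply: IH => //; apply: ltnW.
  by exists t; rewrite h h'.
by apply; [apply: leqnn | rewrite csum_ge].
Qed.

Lemma blk_mono a p q : p <= q -> blk a p <= blk a q.
Proof. move=> pq; apply: leq_sum => t _; case h: (csum a t.+1 <= p) => //; by rewrite (leq_trans h pq). Qed.

Lemma blk_dec a (t0 : 'I_k) i q : csum a t0 <= i < csum a t0.+1 ->
  blk (dec a t0) q = blk a (bump i q).
Proof.
move=> /andP[h1 h2]; have ha : 0 < a t0 by move: h2; rewrite csumS; lia.
apply: eq_bigr => t _; rewrite csum_dec // ltnS /bump.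
case: (leqP t0 t) => h.
  have := csum_mono a (ltnW (leq_ltn_trans h (ltnSn t))); rewrite -/(t0 < t.+1) => _.
  have : csum a t0.+1 <= csum a t.+1 by apply: csum_mono.
  case: (leqP i q) => /= h3 h4; congr (nat_of_bool _); apply/idP/idP; lia.
have : csum a t.+1 <= csum a t0 by apply: csum_mono.
move=> h4; case: (leqP i q) => /= h3; congr (nat_of_bool _); apply/idP/idP; lia.
Qed.

End Blocks.

Lemma bump_lt i x y : (bump i x < bump i y) = (x < y).
Proof. rewrite /bump; case: (leqP i x); case: (leqP i y) => /= h1 h2; apply/idP/idP; lia. Qed.
Lemma bump_lti i x : (bump i x < i) = (x < i).
Proof. rewrite /bump; case: (leqP i x) => /= h1; apply/idP/idP; lia. Qed.
Lemma bump_gti i x : (i < bump i x) = (i <= x).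
Proof. rewrite /bump; case: (leqP i x) => /= h1; apply/idP/idP; lia. Qed.

Lemma sum_lift n (i j : 'I_n.+1) (F : 'S_n.+1 -> nat) :
  \sum_(pi : 'S_n.+1 | pi i == j) F pi = \sum_(s : 'S_n) F (lift_perm i j s).
Proof.
rewrite (reindex (lift_perm i j)); last first.
  pose ulsf i (s : 'S_n.+1) k := odflt k (unlift (s i) (s (lift i k))).
  have ulsfK i' (s : 'S_n.+1) k: lift (s i') (ulsf i' s k) = s (lift i' k).
    rewrite /ulsf; have:= neq_lift i' k.
    by rewrite -(can_eq (permK s)) => /unlift_some[] ? ? ->.
  have inj_ulsf: injective (ulsf i _).
    move=> s; apply: can_inj (ulsf (s i) s^-1%g) _ => k'.
    by rewrite {1}/ulsf ulsfK !permK liftK.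
  exists (fun s => perm (inj_ulsf s)) => [s _ | s].
    by apply/permP=> k'; rewrite permE /ulsf lift_perm_lift lift_perm_id liftK.
  move/(s _ =P _) => si0; apply/permP=> k.
  case: (unliftP i k) => [k'|] ->; rewrite ?lift_perm_id //.
  by rewrite lift_perm_lift -si0 permE ulsfK.
by apply: eq_bigl => s; rewrite lift_perm_id eqxx.
Qed.

Section Perms.
Variable k : nat.
Implicit Types a : {ffun 'I_k -> nat}.

Definition allp a N (pi : 'S_N) :=
  [forall x : 'I_N, forall y : 'I_N, ((x < y) && (blk a x == blk a y)) ==> (pi y < pi x)].

Lemma allpP a N (pi : 'S_N) :
  reflect (forall x y : 'I_N, x < y -> blk a x = blk a y -> pi y < pi x) (allp a pi).
Proof.
apply: (iffP forallP) => H.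
  move=> x y xy bxy; have /forallP/(_ y)/implyP := H x; apply; by rewrite xy bxy eqxx.
move=> x; apply/forallP => y; apply/implyP => /andP[xy /eqP bxy]; exact: H.
Qed.

Lemma sb_blk a p : p.+1 < msum a -> same_block a p.+1 p.+2 = (blk a p == blk a p.+1).
Proof.
move=> hp; apply/existsP/eqP.
  case=> t /andP[h1 h2].
  rewrite (@blk_char _ a t p) ?(@blk_char _ a t p.+1) //; apply/andP; split => //; lia.
move=> e; have [h1 /andP[h2 h3]] := blk_ex (ltnW hp).
have [_ /andP[_ h4]] := blk_ex hp; rewrite -e in h4.
exists (Ordinal h1) => /=; apply/andP; split => //.
Qed.

Lemma chain (b f : nat -> nat) N : (forall p q, p <= q -> b p <= b q) ->
  (forall p, p.+1 < N -> b p = b p.+1 -> f p.+1 < f p) ->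
  forall x y, x < y -> y < N -> b x = b y -> f y < f x.
Proof.
move=> bm H x; elim=> [//|y IH] xy yN bxy.
case: (ltngtP x y) => [lxy|gxy|exy]; last first.
- by move: bxy; rewrite exy => bxy; apply: H.
- by move: xy; rewrite ltnS leqNgt gxy.
have e1 : b x = b y.
  by apply/eqP; rewrite eqn_leq (bm x y (ltnW lxy)) /= bxy; apply: bm; exact: leqnSn.
have := IH lxy (ltnW yN) e1.
have := H y yN (etrans (esym e1) bxy). exact: ltn_trans.
Qed.

Lemma in_Sa_allp a N (pi : 'S_N) : N = msum a -> in_Sa a pi = allp a pi.
Proof.
move=> hN; apply/forallP/allpP.
  move=> H x y xy bxy.
  pose f p := if insub p is Some o then val (pi o) else 0.
  have fE (o : 'I_N) : f o = pi o by rewrite /f valK.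
  rewrite -(fE x) -(fE y); apply: (@chain (blk a) f N) => //; first by move=> p q; apply: blk_mono.
  move=> p pN bp; have p1 : p < N by apply: ltnW.
  have := H (Ordinal p1) => /forallP/(_ (Ordinal pN))/implyP; rewrite /f !insubT; apply.
  by rewrite /= eqxx /= sb_blk ?bp // -hN.
move=> H p; apply/forallP => q; apply/implyP => /andP[/eqP qp sb].
apply: H; first by rewrite qp.
apply/eqP; move: sb; rewrite qp sb_blk //; rewrite -hN -qp //.
Qed.

Lemma allp_lift a n (i v : 'I_n.+1) (s : 'S_n) (t0 : 'I_k) :
  csum a t0 <= i < csum a t0.+1 ->
  allp a (lift_perm i v s) = allp (dec a t0) s &&
    [forall q : 'I_n, (blk (dec a t0) q == t0) ==> (if q < i then v <= s q else s q < v)].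
Proof.
move=> hi.
have bi : blk a i = t0 by apply: blk_char.
have bd (q : 'I_n) : blk (dec a t0) q = blk a (lift i q) by rewrite (blk_dec q hi).
apply/idP/idP.
  move/allpP => H; apply/andP; split.
    apply/allpP => x y xy bxy.
    have := H (lift i x) (lift i y); rewrite !lift_perm_lift /= !bump_lt; apply => //.
    by rewrite -!bd.
  apply/forallP => q; apply/implyP => /eqP bq.
  case: ifP => qi.
    have := H (lift i q) i; rewrite lift_perm_lift lift_perm_id /= bump_lti bump_gti.
    by apply => //; rewrite -bd bq bi.
  have := H i (lift i q); rewrite lift_perm_lift lift_perm_id /= bump_lti bump_gti.
  by rewrite leqNgt qi; apply => //; rewrite -bd bq bi.
case/andP => /allpP H /forallP C; apply/allpP => x y.
case: (unliftP i x) => [x'|] ->; case: (unliftP i y) => [y'|] ->; rewrite ?lift_perm_lift ?lift_perm_id /=.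
- by rewrite !bump_lt -!bd => xy bxy; apply: H.
- rewrite bump_lti => xi; rewrite -bd bi => /eqP bx.
  by have := implyP (C x') bx; rewrite xi bump_gti.
- rewrite bump_gti => iy; rewrite -bd bi => /esym/eqP bx.
  by have := implyP (C y') bx; rewrite ltnNge iy /= bump_lti.
- by rewrite ltnn.
Qed.

End Perms.

Lemma sum_b01 (I : finType) (P : pred I) (b : bool) :
  (b -> exists i, P i) -> (forall i, P i -> b) -> (forall i j, P i -> P j -> i = j) ->
  \sum_i (P i : nat) = b.
Proof.
move=> H1 H2 H3; case: b H1 H2 => H1 H2.
  have [i Pi] := H1 isT; rewrite (bigD1 i) //= Pi big1 // => j nji.
  by case: (boolP (P j)) => // /H3 /(_ Pi) e; move: nji; rewrite e eqxx.
by rewrite big1 // => j; case: (boolP (P j)) => // /H2.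
Qed.

Lemma card_sum (T : finType) (P : pred T) : #|[set x | P x]| = \sum_x (P x : nat).
Proof. by rewrite cardsE -sum1_card big_mkcond /=; apply: eq_bigr => x _; rewrite unfold_in; case: (P x). Qed.

Definition natf n (s : 'S_n) (r : nat) : nat := if insub r is Some o then val (s o) else 0.
Lemma natfE n (s : 'S_n) (o : 'I_n) : natf s o = s o.
Proof. by rewrite /natf valK. Qed.

Definition ins n c m (x : nat) (s : 'S_n) : bool :=
  [forall q : 'I_n, (c <= q < c + m - 1) ==> (if q < x then x <= s q else s q < x)].

Lemma countK n c m (s : 'S_n) :
  (forall q q' : 'I_n, c <= q -> q < q' -> q' < c + m - 1 -> s q' < s q) ->
  c + m - 1 <= n -> 0 < m ->
  \sum_(x : 'I_n.+1) ((c <= x < c + m) && ins c m x s : nat) =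
  [forall q : 'I_n, (c <= q < c + m - 1) ==> (s q != q)].
Proof.
move=> sdec cn m0; apply: sum_b01.
- move/forallP => nofp.
  pose P r := (c <= r) && ((c + m - 1 <= r) || (natf s r < r)).
  have exP : exists r, P r by exists (c + m - 1); apply/andP; split; [lia | by rewrite leqnn].
  case: (ex_minnP exP) => x0 Px0 minx0.
  have notP (q : 'I_n) : c <= q -> ~~ P q -> q <= s q.
    by move=> cq; rewrite /P cq natfE /= negb_or -leqNgt => /andP[_].
  have x0le : x0 <= c + m - 1 by apply: minx0; apply/andP; split; [lia | by rewrite leqnn].
  have x0n : x0 < n.+1 by lia.
  exists (Ordinal x0n) => /=; move: (Px0) => /andP[cx0 _]; rewrite cx0 /=.
  apply/andP; split; first lia.
  apply/forallP => q; apply/implyP => /andP[cq qc].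
  case: ifP => qx0.
    have nPq : ~~ P q by apply/negP => /minx0; lia.
    have hq : q <= s q by apply: notP.
    have fq : s q != q := implyP (nofp q) (andb_true_intro (conj cq qc)).
    have q1 : q < s q by rewrite ltn_neqAle eq_sym fq hq.
    case: (ltngtP q.+1 x0) => h; last by rewrite -h.
      have q'n : x0.-1 < n by lia.
      pose q' := Ordinal q'n.
      have nPq' : ~~ P q' by apply/negP => /minx0 /=; lia.
      have fq' : s q' != q' := implyP (nofp q') (andb_true_intro (conj (ltac:(simpl; lia) : c <= q') (ltac:(simpl; lia) : q' < c + m - 1))).
      have hq' : q' <= s q' by apply: notP => //=; lia.
      have : q' < s q' by rewrite ltn_neqAle eq_sym fq' hq'.
      have : s q' < s q by apply: sdec => //=; lia.
      simpl; lia.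
    lia.
  have x0lt : x0 < c + m - 1 by lia.
  have x0n' : x0 < n by lia.
  have fx0 : s (Ordinal x0n') < x0.
    have := natfE s (Ordinal x0n'); rewrite /= => e.
    by move: Px0; rewrite /P e => /andP[_ /orP[h|//]]; lia.
  case: (ltngtP x0 q) => h.
  + have : s q < s (Ordinal x0n') by apply: sdec => //=.
    lia.
  + lia.
  + by have -> : q = Ordinal x0n' by apply: val_inj.
- move=> x /andP[/andP[cx xc] /forallP insx]; apply/forallP => q; apply/implyP => hq.
  apply/eqP => fq; have := implyP (insx q) hq; rewrite fq; case: ifP; lia.
- move=> x y /andP[/andP[cx xc] /forallP insx] /andP[/andP[cy yc] /forallP insy].
  apply: val_inj => /=; apply/eqP; apply: contraT => nxy.
  wlog xy : x y cx xc insx cy yc insy nxy / x < y.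
    move=> W; case: (ltngtP x y) => h; [exact: (W x y) | | by rewrite h eqxx in nxy].
    by apply: (W y x) => //; rewrite eq_sym.
  have xn : x < n by lia.
  have := implyP (insx (Ordinal xn)); rewrite /= ltnn cx /=.
  have := implyP (insy (Ordinal xn)); rewrite /= xy cx /=.
  have h : x < c + m - 1 by lia.
  rewrite h; move=> /(_ isT) h1 /(_ isT) h2; lia.
Qed.

Section Count.
Variable k : nat.
Implicit Types a : {ffun 'I_k -> nat}.

Definition nofp a N J (pi : 'S_N) := [forall p : 'I_N, (p.+1 <= csum a J) ==> (pi p != p)].

Lemma cardD a N J : #|Dset a N J| = \sum_(pi : 'S_N) (in_Sa a pi && nofp a J pi : nat).
Proof. by rewrite /Dset card_sum. Qed.

Lemma nofp_mono a N J J' (pi : 'S_N) : J <= J' -> nofp a J' pi -> nofp a J pi.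
Proof.
move=> JJ /forallP H; apply/forallP => p; apply/implyP => hp; apply: (implyP (H p)).
exact: (leq_trans hp (csum_mono a JJ)).
Qed.

Lemma nofp0 a N (pi : 'S_N) : nofp a 0 pi.
Proof. by apply/forallP => p; rewrite csum0. Qed.

Lemma nofp_lift a a' J n (x : 'I_n.+1) (s : 'S_n) :
  csum a J = csum a' J -> csum a J <= x -> nofp a J (lift_perm x x s) = nofp a' J s.
Proof.
move=> e cx; apply/forallP/forallP => H.
  move=> q; apply/implyP => hq.
  have qx : q < x by move: hq; rewrite -e; lia.
  have bq : bump x q = q by rewrite /bump leqNgt qx.
  have := implyP (H (lift x q)); rewrite /= bq e => /(_ hq).
  by rewrite lift_perm_lift (inj_eq lift_inj).
move=> p; apply/implyP => hp.
case: (unliftP x p) hp => [q|] -> /= hp; last by move: hp; rewrite ltnNge cx.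
have bq : bump x q = q.
  rewrite /bump; case: (leqP x q) => h //=; move: hp; rewrite /bump h add1n => hq.
  by have := leq_trans (leq_trans hq cx) h; rewrite ltnNge leqnSn.
rewrite lift_perm_lift (inj_eq lift_inj); apply: (implyP (H q)); by rewrite -e -bq.
Qed.

Lemma blk_dec_iff a n (t0 : 'I_k) (q : 'I_n) : msum a = n.+1 -> 0 < a t0 ->
  (blk (dec a t0) q == t0) = (csum a t0 <= q < csum a t0 + a t0 - 1).
Proof.
move=> ha hm.
have hc' : csum (dec a t0) t0 = csum a t0 by rewrite csum_dec // ltnn subn0.
have hd' : csum (dec a t0) t0.+1 = csum a t0 + a t0 - 1 by rewrite csum_dec // ltnSn csumS.
have qn : q < msum (dec a t0) by rewrite msum_dec // ha.
apply/eqP/idP.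
  move=> e; have [_] := blk_ex qn; by rewrite e hc' hd'.
by move=> h; apply: blk_char => //; rewrite hc' hd'.
Qed.

End Count.

Section C2.
Variable k : nat.
Implicit Types a : {ffun 'I_k -> nat}.

Lemma C2 a n (t0 : 'I_k) : msum a = n.+1 -> 0 < a t0 ->
  #|Dset a n.+1 t0| = #|Dset a n.+1 t0.+1| + #|Dset (dec a t0) n t0.+1|.
Proof.
move=> ha hm.
set a' := dec a t0. set c := csum a t0. set m := a t0.
have hd : csum a t0.+1 = c + m := csumS a t0.
have ha' : msum a' = n by rewrite msum_dec // ha.
have hc' : csum a' t0 = c by rewrite csum_dec // ltnn subn0.
have hd' : csum a' t0.+1 = c + m - 1 by rewrite csum_dec // ltnSn hd.
have hdn : c + m <= n.+1 by rewrite -hd -ha csum_le_msum.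
have bq (q : 'I_n) : (blk a' q == t0) = (c <= q < c + m - 1) by apply: blk_dec_iff.
rewrite !cardD.
have -> : \sum_(pi : 'S_n.+1) (in_Sa a pi && nofp a t0 pi : nat) =
   \sum_(pi : 'S_n.+1) (in_Sa a pi && nofp a t0.+1 pi : nat) +
   \sum_(pi : 'S_n.+1) (in_Sa a pi && nofp a t0 pi && ~~ nofp a t0.+1 pi : nat).
  rewrite -big_split; apply: eq_bigr => pi _.
  case: (in_Sa a pi); case h1: (nofp a t0.+1 pi); case h0: (nofp a t0 pi) => //=.
  by rewrite (nofp_mono (leqnSn t0) h1) in h0.
congr (_ + _).
rewrite (eq_bigr (fun pi : 'S_n.+1 => \sum_(x : 'I_n.+1)
   ((c <= x < c + m) && (in_Sa a pi && nofp a t0 pi && (pi x == x)) : nat))); last first.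
  move=> pi _; symmetry; apply: sum_b01.
  - case/andP => /andP[A nf0] /forallPn [p]; rewrite negb_imply negbK => /andP[hp /eqP fp].
    exists p; rewrite A nf0 fp eqxx /= andbT.
    move: (forallP nf0 p); rewrite fp eqxx implybF -ltnNge ltnS => ->.
    by rewrite -hd.
  - move=> x /andP[/andP[cx xd] /andP[/andP[A nf0] /eqP fx]]; rewrite A nf0 /=.
    apply/forallPn; exists x; rewrite negb_imply negbK fx eqxx andbT hd; exact: xd.
  - move=> x y /andP[/andP[cx xd] /andP[/andP[A nf0] /eqP fx]]
                /andP[/andP[cy yd] /andP[_ /eqP fy]].
    have /allpP H : allp a pi by rewrite -(in_Sa_allp _ (esym ha)).
    have bx : blk a x = t0 by apply: blk_char => //; rewrite cx hd.
    have bY : blk a y = t0 by apply: blk_char => //; rewrite cy hd.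
    apply: val_inj; case: (ltngtP x y) => h //.
    + by have := H x y h (etrans bx (esym bY)); rewrite fx fy ltnNge (ltnW h).
    + by have := H y x h (etrans bY (esym bx)); rewrite fx fy ltnNge (ltnW h).
rewrite exchange_big /=.
rewrite (eq_bigr (fun x : 'I_n.+1 => \sum_(s : 'S_n) ((c <= x < c + m) &&
    (allp a' s && ins c m x s && nofp a' t0 s)) : nat)); last first.
  move=> x _.
  rewrite (eq_bigr (fun pi : 'S_n.+1 => if pi x == x then ((c <= x < c + m) && (in_Sa a pi && nofp a t0 pi)) : nat else 0)); last first.
    by move=> pi _; case: (pi x == x); case: (c <= x < c + m); case: (in_Sa a pi); case: (nofp a t0 pi).
  rewrite -big_mkcond /= sum_lift; apply: eq_bigr => s _.
  case: (boolP (c <= x < c + m)) => //= cx.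
  rewrite (in_Sa_allp _ (esym ha)) (allp_lift _ _ (_ : c <= x < csum a t0.+1)); last by rewrite hd.
  rewrite (@nofp_lift k a a' (t0 : nat) n x s (esym hc')); last by case/andP: cx.
  rewrite -andbA andbCA andbA; congr (_ && _).
  rewrite andbC; congr (_ && _); apply: eq_forallb => q.
  by have := bq q; rewrite /a' => ->.
rewrite exchange_big /=; apply: eq_bigr => s _.
have nsplit : nofp a' t0.+1 s = nofp a' t0 s &&
    [forall q : 'I_n, (c <= q < c + m - 1) ==> (s q != q)].
  apply/idP/idP.
    move=> /forallP H; apply/andP; split; apply/forallP => q; apply/implyP => hq;
      apply: (implyP (H q)); move: hq; rewrite ?hc' ?hd'; lia.
  case/andP => /forallP H1 /forallP H2; apply/forallP => q; apply/implyP; rewrite hd' => hq.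
  case: (ltnP q c) => h.
    by apply: (implyP (H1 q)); rewrite hc'.
  by apply: (implyP (H2 q)); rewrite h /=; lia.
rewrite (in_Sa_allp _ (esym ha')) nsplit.
case: (boolP (allp a' s && nofp a' t0 s)) => H; last first.
  rewrite big1; last by move=> x _; case/nandP: H => /negbTE ->; rewrite ?andbF.
  by case/nandP: H => /negbTE ->; rewrite ?andbF.
case/andP: H => A0 N0; rewrite A0 N0 /=.
rewrite (eq_bigr (fun x : 'I_n.+1 => ((c <= x < c + m) && ins c m x s : nat))); last first.
  by move=> x _; rewrite andbT.
apply: countK => //; last by lia.
move=> q q' cq qq' q'c; move/allpP: A0; apply => //.
have e1 : blk a' q = t0 by apply/eqP; rewrite bq cq /=; lia.
have e2 : blk a' q' = t0 by apply/eqP; rewrite bq; lia.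
by rewrite e1 e2.
Qed.
End C2.

Section C1.
Variable k : nat.
Implicit Types a : {ffun 'I_k -> nat}.

Lemma C1 a n : msum a = n.+1 ->
  #|Dset a n.+1 0| = \sum_(t < k) (0 < a t) * #|Dset (dec a t) n 0|.
Proof.
move=> ha.
pose H (t : nat) := \sum_(s : 'S_n) (allp (dec a t) s : nat).
have -> : \sum_(t < k) (0 < a t) * #|Dset (dec a t) n 0| = \sum_(t < k) (0 < a t) * H t.
  apply: eq_bigr => t _; case: (posnP (a t)) => // ht; rewrite !mul1n cardD /H.
  apply: eq_bigr => s _; rewrite nofp0 andbT (in_Sa_allp _ (esym _)) //.
  by rewrite msum_dec // ha.
rewrite cardD.
rewrite (eq_bigr (fun pi => allp a pi : nat)); last first.
  by move=> pi _; rewrite nofp0 andbT (in_Sa_allp _ (esym ha)).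
rewrite (partition_big (fun pi : 'S_n.+1 => (pi^-1)%g ord_max) xpredT) //=.
rewrite (eq_bigr (fun x : 'I_n.+1 => ((x : nat) == csum a (blk a x)) * H (blk a x))); last first.
  move=> x _.
  rewrite (eq_bigl (fun pi : 'S_n.+1 => pi x == ord_max)); last first.
    by move=> pi; apply/eqP/eqP => [<-|<-]; rewrite ?permKV ?permK.
  rewrite sum_lift.
  have xn : x < msum a by rewrite ha.
  have [tk hx] := blk_ex xn.
  pose t0 := Ordinal tk.
  have hx' : csum a t0 <= x < csum a t0.+1 by [].
  have hm : 0 < a t0 by move: hx'; rewrite csumS; lia.
  rewrite /H big_distrr /=; apply: eq_bigr => s _.
  rewrite (allp_lift _ _ hx').
  have -> : [forall q : 'I_n, (blk (dec a t0) q == t0) ==>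
       (if q < x then (ord_max : 'I_n.+1) <= s q else s q < (ord_max : 'I_n.+1))]
       = ((x : nat) == csum a t0).
    apply/forallP/eqP.
      move=> F; apply/eqP; rewrite eqn_leq; case/andP: hx' => -> hx2; rewrite andbT.
      rewrite leqNgt; apply/negP => cx.
      have cn : csum a t0 < n by lia.
      have := implyP (F (Ordinal cn)); rewrite blk_dec_iff //= cx leqnn /=.
      have -> : csum a t0 < csum a t0 + a t0 - 1 by move: hx2; rewrite csumS; lia.
      by move=> /(_ isT); rewrite leqNgt ltn_ord.
    move=> ex q; apply/implyP; rewrite blk_dec_iff // => /andP[cq _].
    by rewrite ex ltnNge cq /= ltn_ord.
  rewrite /t0 /=; case: (_ == _ :> nat); by rewrite ?andbT ?andbF ?mul1n ?mul0n.
symmetry.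
rewrite (eq_bigr (fun t : 'I_k => \sum_(x : 'I_n.+1) (((blk a x == t :> nat) && ((x : nat) == csum a t)) : nat) * H t)); last first.
  move=> t _; rewrite -big_distrl /=; congr (_ * _); symmetry; apply: sum_b01.
  - move=> ht; have cn : csum a t < n.+1 by rewrite -ha; have := csum_le_msum a t.+1; rewrite csumS; lia.
    exists (Ordinal cn); rewrite /= eqxx andbT; apply/eqP; apply: blk_char => //.
    by rewrite leqnn csumS /=; lia.
  - move=> x /andP[/eqP bx /eqP ex].
    have xn : x < msum a by rewrite ha.
    have [_] := blk_ex xn; rewrite bx -ex csumS; lia.
  - by move=> x y /andP[_ /eqP ex] /andP[_ /eqP ey]; apply: val_inj => /=; rewrite ex ey.
rewrite exchange_big /=; apply: eq_bigr => x _.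
have xn : x < msum a by rewrite ha.
have [tk hx] := blk_ex xn.
rewrite (bigD1 (Ordinal tk)) //= eqxx /= big1 ?addn0 //.
move=> t /negbTE nt; suff -> : (blk a x == t) = false by [].
apply/negbTE; apply: contraFN nt => /eqP e; apply/eqP; apply: val_inj; by rewrite /= e.
Qed.

End C1.

Section Series.
Local Open Scope ring_scope.
Variable k : nat.
Notation fv := {ffun 'I_k -> nat}.
Implicit Types (m : fv) (f g h : series k).

Definition toN B (u : {ffun 'I_k -> 'I_B}) : fv := [ffun i => val (u i)].
Definition subv m (u : fv) : fv := [ffun i => (m i - u i)%N].
Definition lev (u m : fv) := [forall i, (u i <= m i)%N].
Definition bsum B m (F : fv -> int) :=
  \sum_(u : {ffun 'I_k -> 'I_B.+1} | [forall i, (u i <= m i)%N]) F (toN u).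

Lemma toNE B (u : {ffun 'I_k -> 'I_B}) i : toN u i = u i.
Proof. by rewrite ffunE. Qed.

Lemma toN_inj B : injective (@toN B).
Proof. move=> u v e; apply/ffunP => i; apply: val_inj => /=; by rewrite -!toNE e. Qed.

Lemma smulE f g m : smul f g m = bsum (msum m) m (fun u => f u * g (subv m u)).
Proof.
rewrite /smul /bsum; apply: eq_bigr => u _; congr (_ * g _).
by apply/ffunP => i; rewrite !ffunE.
Qed.

Definition cast B B' (u : {ffun 'I_k -> 'I_B.+1}) : {ffun 'I_k -> 'I_B'.+1} :=
  [ffun i => inord (u i)].

Lemma castE B B' (u : {ffun 'I_k -> 'I_B.+1}) i : (u i <= B')%N -> (cast B' u i : nat) = u i.
Proof. by move=> h; rewrite ffunE inordK. Qed.

Lemma toN_cast B B' (u : {ffun 'I_k -> 'I_B.+1}) m :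
  [forall i, (u i <= m i)%N] -> (forall i, m i <= B')%N -> toN (cast B' u) = toN u.
Proof.
move=> /forallP hu hB; apply/ffunP => i; rewrite !toNE castE //.
exact: leq_trans (hu i) (hB i).
Qed.

Lemma bsum_indep B B' m F : (forall i, m i <= B)%N -> (forall i, m i <= B')%N ->
  bsum B m F = bsum B' m F.
Proof.
move=> hB hB'; rewrite /bsum (reindex_onto (@cast B' B) (@cast B B')); last first.
  move=> u hu; apply: toN_inj; rewrite (toN_cast _ hB) ?(toN_cast _ hB') //.
  apply/forallP => i; rewrite -toNE (toN_cast _ hB') // toNE; exact: (forallP hu).
symmetry; apply: eq_big => u.
  apply/idP/idP.
    move=> hu; have e : toN (cast B u) = toN u by apply: toN_cast hu hB.
    have hu' : [forall i, (cast B u i <= m i)%N] by apply/forallP => i; rewrite -toNE e toNE (forallP hu).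
    rewrite hu' /=; apply/eqP; apply: toN_inj; rewrite (toN_cast _ hB') //.
  case/andP=> h1 /eqP h2; rewrite -h2; apply/forallP => i; rewrite -toNE.
  by rewrite (toN_cast _ hB') // toNE; exact: (forallP h1).
move=> hu; congr F; symmetry; exact: toN_cast hu hB.
Qed.

Lemma bsum_delta B m c F : (forall i, m i <= B)%N ->
  bsum B m (fun u => Posz (u == c) * F u) = if [forall i, (c i <= m i)%N] then F c else 0.
Proof.
move=> hB; rewrite /bsum; case: ifP => hc.
  pose u0 : {ffun 'I_k -> 'I_B.+1} := [ffun i => inord (c i)].
  have e0 : toN u0 = c.
    apply/ffunP => i; rewrite toNE ffunE inordK // ltnS (leq_trans (forallP hc i) (hB i)) //.
  rewrite (bigD1 u0) /=; last by apply/forallP => i; rewrite -toNE e0 (forallP hc).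
  rewrite e0 eqxx mul1r big1 ?addr0 // => u /andP[_ nu].
  case: eqP => [e|]; last by rewrite mul0r.
  by move: nu; rewrite -e0 in e; rewrite (toN_inj e) eqxx.
rewrite big1 // => u hu; case: eqP => [e|]; last by rewrite mul0r.
move: hc; suff -> : [forall i, (c i <= m i)%N] by [].
by apply/forallP => i; rewrite -e toNE (forallP hu).
Qed.

Definition flip m (u : {ffun 'I_k -> 'I_(msum m).+1}) : {ffun 'I_k -> 'I_(msum m).+1} :=
  [ffun i => inord (m i - u i)].

Lemma toN_flip m u : toN (@flip m u) = subv m (toN u).
Proof.
apply/ffunP => i; rewrite toNE !ffunE inordK // ltnS.
exact: leq_trans (leq_subr _ _) (leq_msum m i).
Qed.

Lemma subvK m (u : fv) : [forall i, (u i <= m i)%N] -> subv m (subv m u) = u.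
Proof. move=> /forallP h; apply/ffunP => i; rewrite !ffunE subKn //. Qed.

Lemma lev_subv m (u : fv) : [forall i, (subv m u i <= m i)%N].
Proof. by apply/forallP => i; rewrite ffunE leq_subr. Qed.

Lemma smul_comm f g m : smul f g m = smul g f m.
Proof.
rewrite !smulE /bsum (reindex_onto (@flip m) (@flip m)); last first.
  move=> u hu; apply: toN_inj; rewrite !toN_flip subvK //.
  by apply/forallP => i; rewrite toNE (forallP hu).
apply: eq_big => u.
  have lf : [forall i, (@flip m u i <= m i)%N].
    by apply/forallP => i; rewrite -toNE toN_flip (forallP (lev_subv m _)).
  rewrite lf /=; apply/eqP/idP.
    move=> e; apply/forallP => i; rewrite -e -toNE toN_flip.
    exact: (forallP (lev_subv m _)).
  move=> hu; apply: toN_inj; rewrite !toN_flip subvK //.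
  by apply/forallP => i; rewrite toNE (forallP hu).
move=> /andP[_ /eqP e].
have hu : [forall i, (u i <= m i)%N].
  by apply/forallP => i; rewrite -e -toNE toN_flip (forallP (lev_subv m _)).
rewrite toN_flip subvK; first exact: mulrC.
by apply/forallP => i; rewrite toNE (forallP hu).
Qed.

Definition shift B (u : fv) (v : {ffun 'I_k -> 'I_B.+1}) : {ffun 'I_k -> 'I_B.+1} :=
  [ffun i => inord (v i + u i)].
Definition unshift B (u : fv) (w : {ffun 'I_k -> 'I_B.+1}) : {ffun 'I_k -> 'I_B.+1} :=
  [ffun i => inord (w i - u i)].

Lemma smul_assoc f g h m : smul (smul f g) h m = smul f (smul g h) m.
Proof.
set N := msum m.
have mN i : (m i <= N)%N by apply: leq_msum.
rewrite !smulE /bsum.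
rewrite (eq_bigr (fun w : {ffun 'I_k -> 'I_N.+1} =>
   \sum_(u : {ffun 'I_k -> 'I_N.+1} | [forall i, (u i <= toN w i)%N])
      f (toN u) * g (subv (toN w) (toN u)) * h (subv m (toN w)))); last first.
  move=> w /forallP hw; rewrite smulE (bsum_indep _ (B' := N)); last first.
  - by move=> i; rewrite toNE (leq_trans (hw i)).
  - exact: leq_msum.
  by rewrite /bsum mulr_suml.
rewrite (exchange_big_dep (fun u : {ffun 'I_k -> 'I_N.+1} => [forall i, (u i <= m i)%N])) /=; last first.
  move=> w u /forallP hw /forallP hu; apply/forallP => i.
  by apply: leq_trans (hu i) _; rewrite toNE hw.
apply: eq_bigr => u /forallP hu.
rewrite smulE (bsum_indep _ (B' := N)); last first.
- by move=> i; rewrite ffunE (leq_trans (leq_subr _ _)).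
- exact: leq_msum.
rewrite /bsum mulr_sumr.
rewrite (reindex_onto (@shift N (toN u)) (@unshift N (toN u))); last first.
  move=> w /andP[/forallP hw /forallP huw]; apply/ffunP => i; apply: val_inj.
  have := huw i; rewrite ffunE => h1.
  have wN : (w i <= N)%N by apply: leq_trans (hw i) _.
  rewrite /shift /unshift !ffunE /=.
  rewrite (inordK (_ : w i - u i < N.+1)%N); last by rewrite ltnS (leq_trans (leq_subr _ _)).
  by rewrite subnK // inordK.
have sh (j : {ffun 'I_k -> 'I_N.+1}) : [forall i, (j i <= subv m (toN u) i)%N] ->
    toN (shift (toN u) j) = [ffun i => (j i + u i)%N].
  move=> /forallP hj; apply/ffunP => i; rewrite !ffunE /= inordK // ltnS.
  have := hj i; rewrite !ffunE => h1; apply: leq_trans (mN i).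
  by rewrite -(subnK (hu i)) leq_add2r.
have pe (j : {ffun 'I_k -> 'I_N.+1}) :
  [forall i, (shift (toN u) j i <= m i)%N] && [forall i, (u i <= toN (shift (toN u) j) i)%N]
    && (unshift (toN u) (shift (toN u) j) == j) = [forall i, (j i <= subv m (toN u) i)%N].
  apply/idP/idP.
    case/andP => /andP[/forallP h1 _] /eqP h2; apply/forallP => i; rewrite -h2.
    rewrite /unshift ffunE inordK; last first.
      by rewrite ltnS (leq_trans (leq_subr _ _)) // -ltnS.
    by have := h1 i; rewrite /shift /toN !ffunE => h1p; apply: leq_sub2r.
  move=> hj; have e := sh j hj; move/forallP: hj => hj'.
  have lm i : (j i + u i <= m i)%N.
    by have := hj' i; rewrite !ffunE => h1; rewrite -(subnK (hu i)) leq_add2r.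
  apply/andP; split; first (apply/andP; split).
  - by apply/forallP => i; rewrite -[X in (X <= _)%N]toNE e ffunE lm.
  - by apply/forallP => i; rewrite e ffunE leq_addl.
  - apply/eqP/ffunP => i; apply: val_inj.
    rewrite /unshift ffunE /= -[X in (X - _)%N]toNE e !ffunE addnK inordK //.
apply: eq_big => [j | j]; first exact: pe.
rewrite pe => hj; rewrite sh // mulrA; congr (_ * g _ * h _).
  by apply/ffunP => i; rewrite !ffunE addnK.
by apply/ffunP => i; rewrite !ffunE addnC subnDA.
Qed.

End Series.

Section Main.
Local Open Scope ring_scope.
Variable k : nat.
Notation fv := {ffun 'I_k -> nat}.
Implicit Types (m : fv) (f g h : series k).

Lemma smul_congrl f f' g m : (forall m', f m' = f' m') -> smul f g m = smul f' g m.
Proof. by move=> e; apply: eq_bigr => u _; rewrite e. Qed.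

Lemma smul_congrr f g g' m : (forall m', g m' = g' m') -> smul f g m = smul f g' m.
Proof. by move=> e; apply: eq_bigr => u _; rewrite e. Qed.

Lemma smul_addl f f' g m : smul (sadd f f') g m = smul f g m + smul f' g m.
Proof. by rewrite /smul -big_split; apply: eq_bigr => u _; rewrite /sadd mulrDl. Qed.

Lemma smul_oppl f g m : smul (sopp f) g m = - smul f g m.
Proof. by rewrite /smul -sumrN; apply: eq_bigr => u _; rewrite /sopp mulNr. Qed.

Lemma smul_zerol g m : smul (fun _ => 0) g m = 0.
Proof. by rewrite /smul big1 // => u _; rewrite mul0r. Qed.

Definition ev (i : nat) : fv := [ffun t : 'I_k => ((t : nat) == i) : nat].

Lemma smul_svar i g m :
  smul (@svar k i) g m = if [forall t, (ev i t <= m t)%N] then g (subv m (ev i)) else 0.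
Proof. by rewrite smulE bsum_delta //; apply: leq_msum. Qed.

Lemma smul_sone g m : smul (@sone k) g m = g m.
Proof.
rewrite smulE (@bsum_delta k (msum m) m [ffun => 0%N] (fun u => g (subv m u))); last exact: leq_msum.
have -> : [forall t, ([ffun => 0%N] : fv) t <= m t]%N by apply/forallP => t; rewrite ffunE.
by congr g; apply/ffunP => t; rewrite !ffunE subn0.
Qed.

Lemma smul_svar_ord (t : 'I_k) g m :
  smul (@svar k t) g m = if (0 < m t)%N then g (dec m t) else 0.
Proof.
rewrite smul_svar.
have -> : [forall s, (ev t s <= m s)%N] = (0 < m t)%N.
  apply/forallP/idP.
    by move=> /(_ t); rewrite ffunE eqxx.
  move=> h s; rewrite ffunE; case: eqP => //= e.
  by have -> : s = t by apply: val_inj.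
by congr (if _ then g _ else _); apply/ffunP => s; rewrite !ffunE.
Qed.

Definition Gs (j : nat) : series k := fun m => Posz #|Dset m (msum m) j|.

Lemma msum_pos m (t : 'I_k) : (0 < m t)%N -> exists n, msum m = n.+1.
Proof.
move=> h; exists (msum m).-1; rewrite prednK //.
exact: leq_trans h (leq_msum m t).
Qed.

Lemma G_step (t0 : 'I_k) m : Gs t0 m = Gs t0.+1 m + smul (@svar k t0) (Gs t0.+1) m.
Proof.
rewrite smul_svar_ord; case: (posnP (m t0)) => ht.
  by rewrite addr0 /Gs /Dset csumS ht addn0.
have [n hn] := msum_pos ht.
by rewrite /Gs hn (C2 hn ht) PoszD msum_dec // hn.
Qed.

Definition Fo := (fun i acc => smul (sadd (@sone k) (@svar k i)) acc).

Lemma Q_prop len : forall l, (l + len <= k)%N -> forall m,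
  smul (foldr Fo (@sone k) (iota l len)) (Gs (l + len)) m = Gs l m.
Proof.
elim: len => [|len IH] l hl m; first by rewrite addn0 smul_sone.
rewrite /= /Fo smul_assoc.
rewrite (smul_congrr _ (g' := Gs l.+1)); last first.
  by move=> mm; rewrite addnS -addSn IH // addSnnS.
rewrite smul_addl smul_sone.
have lk : (l < k)%N by lia.
by rewrite (G_step (Ordinal lk)).
Qed.

Lemma smul_foldvar (s : seq nat) g m :
  smul (foldr (fun i acc => sadd (@svar k i) acc) (fun _ => 0) s) g m =
  \sum_(i <- s) smul (@svar k i) g m.
Proof.
elim: s => [|i s IH] /=; first by rewrite big_nil smul_zerol.
by rewrite smul_addl IH big_cons.
Qed.

Lemma smul_O g m : smul (@one_minus_sum k) g m =
  g m - \sum_(t < k) (if (0 < m t)%N then g (dec m t) else 0).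
Proof.
rewrite /one_minus_sum smul_addl smul_sone smul_oppl smul_foldvar.
have -> : iota 0 k = index_iota 0 k by rewrite /index_iota subn0.
rewrite big_mkord; congr (_ - _); apply: eq_bigr => t _; exact: smul_svar_ord.
Qed.

Lemma Posz_sum (I : Type) (r : seq I) (P : pred I) (F : I -> nat) :
  Posz (\sum_(i <- r | P i) F i) = \sum_(i <- r | P i) Posz (F i).
Proof. exact: (big_morph Posz PoszD). Qed.

Lemma O_prop m : smul (@one_minus_sum k) (Gs 0) m = @sone k m.
Proof.
rewrite smul_O /sone.
case: eqP => [->|nz].
  rewrite big1; last by move=> t _; rewrite ffunE.
  rewrite subr0 /Gs.
  have -> : msum ([ffun => 0%N] : fv) = 0%N by rewrite /msum big1 // => t _; rewrite ffunE.
  have -> : Dset ([ffun => 0%N] : fv) 0 0 = setT.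
    by apply/setP => pi; rewrite !inE; apply/andP; split; apply/forallP => -[].
  by rewrite cardsT card_Sn.
have [t ht] : exists t : 'I_k, (0 < m t)%N.
  case: (pickP (fun t : 'I_k => (0 < m t)%N)) => [t h|h]; first by exists t.
  exfalso; apply: nz; apply/ffunP => t; have := h t; rewrite ffunE lt0n => /negbFE/eqP.
  done.
have [n hn] := msum_pos ht.
rewrite /Gs hn (C1 hn) Posz_sum; apply/eqP; rewrite subr_eq0; apply/eqP; apply: eq_bigr => s _.
case: (posnP (m s)) => hs //=.
by rewrite mul1n msum_dec // hn.
Qed.

Lemma P0 len : forall l, (l + len <= k)%N ->
  foldr Fo (@sone k) (iota l len) [ffun => 0%N] = 1.
Proof.
elim: len => [|len IH] l hl; first by rewrite /= /sone eqxx.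
have lk : (l < k)%N by lia.
rewrite /= /Fo smul_addl smul_sone (smul_svar_ord (Ordinal lk)) ffunE /= addr0.
by apply: IH; lia.
Qed.

End Main.

Section Uniq.
Local Open Scope ring_scope.
Variable k : nat.
Notation fv := {ffun 'I_k -> nat}.

Lemma msum_subv (m u : fv) : [forall i, (u i <= m i)%N] ->
  (msum (subv m u) + msum u)%N = msum m.
Proof.
move=> /forallP h; rewrite /msum -big_split; apply: eq_bigr => i _.
by rewrite /subv ffunE; apply: subnK.
Qed.

Lemma smul_uniq (D g1 g2 : series k) : D [ffun => 0%N] = 1 ->
  (forall m, smul D g1 m = smul D g2 m) -> forall m, g1 m = g2 m.
Proof.
move=> D0 H.
suff: forall N m, (msum m < N)%N -> g1 m = g2 m by move=> S m; apply: (S (msum m).+1).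
elim=> // N IH m hm.
have := H m; rewrite !smulE /bsum.
pose u0 : {ffun 'I_k -> 'I_(msum m).+1} := [ffun => ord0].
have hu0 : [forall i, (u0 i <= m i)%N] by apply/forallP => i; rewrite ffunE.
have tu0 : toN u0 = [ffun => 0%N] by apply/ffunP => i; rewrite !ffunE.
have su0 : subv m [ffun => 0%N] = m by apply/ffunP => i; rewrite !ffunE subn0.
rewrite (bigD1 u0) //= [X in _ = X](bigD1 u0) //= tu0 su0 D0 !mul1r.
rewrite (eq_bigr (fun u => D (toN u) * g2 (subv m (toN u)))); first by move/addIr.
move=> u /andP[hu nu]; congr (_ * _); apply: IH.
have hu' : [forall i, (toN u i <= m i)%N] by apply/forallP => i; rewrite ffunE (forallP hu).
have := msum_subv hu'.
have : (0 < msum (toN u))%N.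
  case: (pickP (fun i => (0 < u i)%N)) => [i hi|h].
    by apply: leq_trans hi _; have := leq_msum (toN u) i; rewrite ffunE.
  exfalso; move/negP: nu; apply; apply/eqP/ffunP => i; apply: val_inj.
  by have := h i; rewrite ffunE /=; case: (u i) => -[].
move=> h1 h2; rewrite ltnS in hm; apply: leq_trans hm.
rewrite -[X in (_ < X)%N]h2.
by rewrite -{1}[msum (subv m (toN u))]addn0 ltn_add2l.
Qed.

End Uniq.

Unset Implicit Arguments.
Theorem mainTheorem1 (k : nat) (a : {ffun 'I_k -> nat}) (n j : nat)
    (hn : n = \sum_(i < k) a i) (hj : (j <= k)%N) :
  (exists g : series k, forall m, smul (@denom k j) g m = @sone k m) /\
  (forall g : series k, (forall m, smul (@denom k j) g m = @sone k m) ->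
     g a = Posz #|Dset a n j|).
Proof.
have E : forall m, smul (@denom k j) (@Gs k j) m = @sone k m.
  move=> m; rewrite /denom (smul_congrl _ (f' := smul (@one_minus_sum k) (@prod_one_plus k j))); last first.
    by move=> mm; apply: smul_comm.
  rewrite smul_assoc (smul_congrr _ (g' := @Gs k 0)); first exact: O_prop.
  by move=> mm; have := @Q_prop k j 0 hj mm; rewrite add0n.
have D0 : @denom k j [ffun => 0%N] = 1%R.
  rewrite /denom smul_comm smul_O big1; last by move=> t _; rewrite ffunE.
  by rewrite subr0; exact: (@P0 k j 0 hj).
split; first by exists (@Gs k j).
move=> g Hg.
have := smul_uniq D0 (fun m => etrans (Hg m) (esym (E m))) a.
by rewrite /Gs hn.
Qed.
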